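(* Let $R$ be a commutative ring, let $I$ be a 2-absorbing ideal of $R$, let $J$ be an ideal of $R$, and let $x,y\in R$ satisfy $xyJ\subseteq I$. Then $xy\in I$ or $xJ\subseteq I$ or $yJ\subseteq I$.
   Context: All rings are commutative with identity $1\neq 0$. An ideal $I$ of $R$ is 2-absorbing if whenever $a,b,c\in R$ and $abc\in I$, then $ab\in I$ or $ac\in I$ or $bc\in I$. *)

(* Defs.v *)
From mathcomp Require Import all_boot all_algebra.
Set Implicit Arguments. Unset Strict Implicit. Unset Printing Implicit Defensive.
Import GRing.Theory.
Local Open Scope ring_scope.

Definition is_ideal (R : comNzRingType) (I : R -> Prop) : Prop :=
  [/\ I 0,
      (forall a b, I a -> I b -> I (a + b)),
      (forall a, I a -> I (- a)) &
      (forall r a, I a -> I (r * a))].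

Definition two_absorbing (R : comNzRingType) (I : R -> Prop) : Prop :=
  is_ideal I /\
  forall a b c : R, I (a * b * c) -> [\/ I (a * b), I (a * c) | I (b * c)].

(* Main.v *)
Require Import Defs.
From Stdlib Require Import Classical.
From mathcomp Require Import all_boot all_algebra.
Local Open Scope ring_scope.
Import GRing.Theory.

Theorem lemma2 (R : comNzRingType) (I J : R -> Prop) (x y : R) :
  two_absorbing I -> is_ideal J ->
  (forall j, J j -> I (x * y * j)) ->
  [\/ I (x * y), (forall j, J j -> I (x * j)) | (forall j, J j -> I (y * j))].
Proof.
move=> [[I0 ID IN IM] Hab] [J0 JD JN JM] H.
have sub : forall u v, I u -> I v -> I (u - v) by move=> u v Hu Hv; apply: ID => //; apply: IN.
destruct (classic (I (x * y))) as [h|nxy]; first by constructor 1.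
destruct (classic (forall j, J j -> I (x * j))) as [h|nx]; first by constructor 2.
destruct (classic (forall j, J j -> I (y * j))) as [h|ny]; first by constructor 3.
exfalso.
case: (not_all_ex_not _ _ nx) => a ha; case: (imply_to_and _ _ ha) => Ja nxa.
case: (not_all_ex_not _ _ ny) => b hb; case: (imply_to_and _ _ hb) => Jb nyb.
have ya : I (y * a) by case: (Hab _ _ _ (H _ Ja)) => // h; exfalso; auto.
have xb : I (x * b) by case: (Hab _ _ _ (H _ Jb)) => // h; exfalso; auto.
case: (Hab _ _ _ (H _ (JD _ _ Ja Jb))) => // h.
- apply: nxa; have := sub _ _ h xb; by rewrite mulrDr addrK.
- apply: nyb; have := sub _ _ h ya; by rewrite mulrDr [y * a + _]addrC addrK.
Qed.
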